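(* Let $T$ be an $\omega_1$-tree that is not special. Suppose that for every node $u\in T$ of limit height a set $C(T,u)\subseteq\{t\in T:t<u\}$ of order type $\omega$, cofinal below $u$, is given. Let $C\subseteq\omega_1$ be a club. Then there exist $\alpha\in C$, a node $v\in T^\alpha$, and nodes $\{u_n:n\in\omega\}$ of limit height with $v< u_n$ for all $n$, such that the set $\bigcup_{n\in\omega}C(T,u_n)\cap\{t\in T:t<v\}$ is infinite.
   Context: An $\omega_1$-tree is a tree of height $\omega_1$ all of whose levels $T^\alpha$ (nodes of height $\alpha$) are countable. $T$ is special if it is a union of countably many antichains. A club is a closed unbounded subset of $\omega_1$. *)

(* Defs.v *)
From Stdlib Require Import List.

Definition countable_set {A : Type} (P : A -> Prop) : Prop :=
  exists f : A -> nat, forall x y, P x -> P y -> f x = f y -> x = y.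

Definition finite_set {A : Type} (P : A -> Prop) : Prop :=
  exists l : list A, forall x, P x -> In x l.

Definition infinite_set {A : Type} (P : A -> Prop) : Prop := ~ finite_set P.

Definition is_omega1 (O : Type) (lt : O -> O -> Prop) : Prop :=
  well_founded lt /\
  (forall a b c, lt a b -> lt b c -> lt a c) /\
  (forall a b, lt a b \/ a = b \/ lt b a) /\
  ~ countable_set (fun _ : O => True) /\
  (forall a, countable_set (fun b => lt b a)).

Definition is_limit {O : Type} (lt : O -> O -> Prop) (a : O) : Prop :=
  (exists b, lt b a) /\ (forall b, lt b a -> exists c, lt b c /\ lt c a).

Definition is_club {O : Type} (lt : O -> O -> Prop) (C : O -> Prop) : Prop :=
  (forall b, exists a, C a /\ lt b a) /\
  (forall a, is_limit lt a ->
     (forall b, lt b a -> exists c, C c /\ lt b c /\ lt c a) -> C a).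

(* (T, ltT) is a tree with height function ht into omega_1 = (O, lt):
   strict partial order, predecessors of every node form a chain, ht is
   strictly monotone and the predecessors of t realize every height below
   ht t (so ht t is the order type of the predecessors of t). *)
Definition is_tree_with_height {O T : Type} (lt : O -> O -> Prop)
  (ltT : T -> T -> Prop) (ht : T -> O) : Prop :=
  (forall t, ~ ltT t t) /\
  (forall r s t, ltT r s -> ltT s t -> ltT r t) /\
  (forall r s t, ltT r t -> ltT s t -> ltT r s \/ r = s \/ ltT s r) /\
  (forall s t, ltT s t -> lt (ht s) (ht t)) /\
  (forall t a, lt a (ht t) -> exists s, ltT s t /\ ht s = a).

Definition level {O T : Type} (ht : T -> O) (a : O) : T -> Prop :=
  fun t => ht t = a.

Definition is_omega1_tree {O T : Type} (lt : O -> O -> Prop)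
  (ltT : T -> T -> Prop) (ht : T -> O) : Prop :=
  is_tree_with_height lt ltT ht /\
  (forall a, exists t, ht t = a) /\
  (forall a, countable_set (level ht a)).

Definition antichain {T : Type} (ltT : T -> T -> Prop) (A : T -> Prop) : Prop :=
  forall s t, A s -> A t -> s <> t -> ~ ltT s t /\ ~ ltT t s.

Definition special {T : Type} (ltT : T -> T -> Prop) : Prop :=
  exists A : nat -> T -> Prop,
    (forall n, antichain ltT (A n)) /\ (forall t, exists n, A n t).

(* S (a subset of the chain below u) has order type omega *)
Definition order_type_omega {T : Type} (ltT : T -> T -> Prop) (S : T -> Prop) : Prop :=
  infinite_set S /\ (forall s, S s -> finite_set (fun r => S r /\ ltT r s)).

Definition good_ladder {T : Type} (ltT : T -> T -> Prop) (u : T) (S : T -> Prop) : Prop :=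
  (forall t, S t -> ltT t u) /\
  order_type_omega ltT S /\
  (forall s, ltT s u -> exists t, S t /\ ltT s t).

(* Main.v *)
Require Import Defs.
From Stdlib Require Import List Wellfounded Cantor Classical ClassicalEpsilon Lia.

Lemma to_nat_inj : forall p q, Cantor.to_nat p = Cantor.to_nat q -> p = q.
Proof. intros p q H. rewrite <- (Cantor.cancel_of_to p), <- (Cantor.cancel_of_to q), H. reflexivity. Qed.

Lemma wf_irrefl {O : Type} (lt : O -> O -> Prop) : well_founded lt -> forall a, ~ lt a a.
Proof. intros wf a. induction (wf a) as [a _ IH]. intro H. exact (IH a H H). Qed.

Lemma pred_unique {O T : Type} (lt : O -> O -> Prop) (ltT : T -> T -> Prop) (ht : T -> O) :
  well_founded lt -> is_tree_with_height lt ltT ht ->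
  forall s1 s2 t, ltT s1 t -> ltT s2 t -> ht s1 = ht s2 -> s1 = s2.
Proof.
  intros wf [irr [tr [ch [mono ex]]]] s1 s2 t H1 H2 E.
  destruct (ch s1 s2 t H1 H2) as [H|[H|H]]; auto.
  - apply mono in H. rewrite E in H. exfalso; exact (wf_irrefl lt wf _ H).
  - apply mono in H. rewrite E in H. exfalso; exact (wf_irrefl lt wf _ H).
Qed.

Lemma special_of_regressive {O T : Type} (lt : O -> O -> Prop) (ltT : T -> T -> Prop) (ht : T -> O)
  (fT : T -> T) (n : T -> nat) :
  well_founded lt -> is_tree_with_height lt ltT ht ->
  (forall t, (exists b, lt b (ht t)) -> ltT (fT t) t) ->
  (forall s t, (exists b, lt b (ht s)) -> (exists b, lt b (ht t)) ->
       fT s = fT t -> n s = n t -> ltT s t -> False) ->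
  special ltT.
Proof.
  intros wf Htree Hreg Hfib.
  destruct Htree as [irr [tr [ch [mono ex]]]].
  set (R := fun x y : T => lt (ht x) (ht y)).
  assert (wfR : well_founded R) by exact (wf_inverse_image T O lt ht wf).
  assert (Hdec : forall t, (exists b, lt b (ht t)) -> R (fT t) t).
  { intros t H. unfold R. apply mono. apply Hreg. exact H. }
  set (Fb := fun t (rec : forall y, R y t -> nat) =>
     match excluded_middle_informative (exists b, lt b (ht t)) with
     | left H => S (Cantor.to_nat (n t, rec (fT t) (Hdec t H)))
     | right _ => 0 end).
  set (label := Fix wfR (fun _ => nat) Fb).
  assert (Heq : forall t, label t = Fb t (fun y _ => label y)).
  { assert (ext : forall (x : T) (f g : forall y : T, R y x -> nat),
        (forall (y : T) (p : R y x), f y p = g y p) -> Fb x f = Fb x g).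
    { intros x f g Hfg. unfold Fb. destruct (excluded_middle_informative _); [rewrite Hfg|]; reflexivity. }
    intro t. exact (@Fix_eq T R wfR (fun _ => nat) Fb ext t). }
  assert (Hnr : forall t, (exists b, lt b (ht t)) -> label t = S (Cantor.to_nat (n t, label (fT t)))).
  { intros t H. rewrite Heq. unfold Fb. destruct (excluded_middle_informative _); [reflexivity|contradiction]. }
  assert (Hr : forall t, ~ (exists b, lt b (ht t)) -> label t = 0).
  { intros t H. rewrite Heq. unfold Fb. destruct (excluded_middle_informative _); [contradiction|reflexivity]. }
  assert (Key : forall t, forall s, ltT s t -> label s = label t -> False).
  { intro t. induction (wfR t) as [t _ IH]. intros s Hst Hl.
    assert (Nt : exists b, lt b (ht t)) by (exists (ht s); apply mono; exact Hst).
    destruct (classic (exists b, lt b (ht s))) as [Ns|Ns].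
    - rewrite (Hnr s Ns), (Hnr t Nt) in Hl. apply eq_add_S in Hl.
      apply to_nat_inj in Hl. injection Hl as Hn Hl.
      assert (Hs : ltT (fT s) t) by (apply tr with s; auto).
      assert (Ht : ltT (fT t) t) by auto.
      destruct (ch _ _ _ Hs Ht) as [H|[H|H]].
      + apply (IH (fT t) (Hdec t Nt) (fT s) H Hl).
      + exact (Hfib s t Ns Nt H Hn Hst).
      + apply (IH (fT s) (mono _ _ Hs) (fT t) H (eq_sym Hl)).
    - rewrite (Hr s Ns), (Hnr t Nt) in Hl. discriminate. }
  exists (fun k t => label t = k). split.
  - intros k s t Hs Ht Hne. split; intro H.
    + apply (Key t s H). congruence.
    + apply (Key s t H). congruence.
  - intro t. exists (label t). reflexivity.
Qed.

Lemma list_ub {O T : Type} (lt : O -> O -> Prop) (ltT : T -> T -> Prop) (ht : T -> O) :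
  is_tree_with_height lt ltT ht ->
  forall u l, (exists p, ltT p u) ->
  exists p, ltT p u /\ forall x, In x l -> ltT x u -> x = p \/ ltT x p.
Proof.
  intros [irr [tr [ch [mono ex]]]] u l [p0 Hp0].
  induction l as [|a l IH].
  - exists p0. split; auto. intros x [].
  - destruct IH as [p [Hp Hl]].
    destruct (classic (ltT a u)) as [Ha|Ha].
    + destruct (ch a p u Ha Hp) as [H|[H|H]].
      * exists p. split; auto. intros x [<-|Hx] Hxu; auto.
      * exists p. split; auto. intros x [<-|Hx] Hxu; auto.
      * exists a. split; auto. intros x [<-|Hx] Hxu; auto.
        destruct (Hl x Hx Hxu) as [->|H']; auto. right; eauto.
    + exists p. split; auto. intros x [<-|Hx] Hxu; [contradiction|auto].
Qed.

Lemma countable_below {O T : Type} (lt : O -> O -> Prop) (ht : T -> O) :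
  (forall a, countable_set (fun b => lt b a)) ->
  (forall a, countable_set (level ht a)) ->
  forall c, exists J : T -> nat, forall t1 t2, lt (ht t1) c -> lt (ht t2) c -> J t1 = J t2 -> t1 = t2.
Proof.
  intros cnt lcnt c.
  destruct (cnt c) as [h Hh].
  set (idx := fun a => proj1_sig (constructive_indefinite_description _ (lcnt a))).
  assert (Hidx : forall a x y, level ht a x -> level ht a y -> idx a x = idx a y -> x = y).
  { intro a. unfold idx. destruct (constructive_indefinite_description _ _) as [f Hf]. exact Hf. }
  exists (fun t => Cantor.to_nat (h (ht t), idx (ht t) t)).
  intros t1 t2 H1 H2 E. apply to_nat_inj in E. injection E as E1 E2.
  assert (Eh : ht t1 = ht t2) by (apply Hh; auto).
  rewrite Eh in E2. apply (Hidx (ht t2)); unfold level; auto.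
Qed.

Theorem mainTheorem4 (O : Type) (lt : O -> O -> Prop)
  (T : Type) (ltT : T -> T -> Prop) (ht : T -> O)
  (CT : T -> T -> Prop) (C : O -> Prop) :
  is_omega1 O lt ->
  is_omega1_tree lt ltT ht ->
  ~ special ltT ->
  (forall u, is_limit lt (ht u) -> good_ladder ltT u (CT u)) ->
  is_club lt C ->
  exists (a : O) (v : T) (u : nat -> T),
    C a /\ ht v = a /\
    (forall n, is_limit lt (ht (u n)) /\ ltT v (u n)) /\
    infinite_set (fun t => (exists n, CT (u n) t) /\ ltT t v).
Proof.
  intros [wf [trans [tri [unc cnt]]]] [Htree [lne lcnt]] Hns Hlad [Cunb Ccl].
  pose proof Htree as Htree'.
  destruct Htree' as [irr [tr [ch [mono ex]]]].
  apply NNPP; intro Hneg.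
  set (F := fun v t => ltT t v /\ exists w, is_limit lt (ht w) /\ ltT v w /\ CT w t).
  assert (HF : forall v, C (ht v) -> finite_set (F v)).
  { intros v Cv. apply NNPP; intro Hinf.
    destruct (cnt (ht v)) as [h Hh].
    set (g := fun t => h (ht t)).
    assert (Hg : forall t1 t2, ltT t1 v -> ltT t2 v -> g t1 = g t2 -> t1 = t2).
    { intros t1 t2 H1 H2 E. apply (pred_unique lt ltT ht wf Htree t1 t2 v H1 H2).
      apply Hh; auto. }
    assert (Hne : exists t0, F v t0).
    { apply NNPP; intro N. apply Hinf. exists nil. intros x Hx. exfalso; apply N; eauto. }
    destruct Hne as [t0 Ht0].
    assert (HW : forall t, exists w, F v t -> is_limit lt (ht w) /\ ltT v w /\ CT w t).
    { intro t. destruct (classic (F v t)) as [H|H].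
      - destruct H as [_ [w Hw]]. exists w. auto.
      - exists v. intro; contradiction. }
    set (W := fun t => proj1_sig (constructive_indefinite_description _ (HW t))).
    assert (HWs : forall t, F v t -> is_limit lt (ht (W t)) /\ ltT v (W t) /\ CT (W t) t).
    { intro t. unfold W. destruct (constructive_indefinite_description _ _) as [w Hw]. exact Hw. }
    assert (Htau : forall k, exists t, F v t /\ forall t', F v t' -> g t' = k -> t = t').
    { intro k. destruct (classic (exists t', F v t' /\ g t' = k)) as [[t' [H1 H2]]|N].
      - exists t'. split; auto. intros t'' H3 H4. apply Hg.
        + exact (proj1 H1).
        + exact (proj1 H3).
        + congruence.
      - exists t0. split; auto. intros t' H1 H2. exfalso; apply N; eauto. }
    set (tau := fun k => proj1_sig (constructive_indefinite_description _ (Htau k))).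
    assert (Htaus : forall k, F v (tau k) /\ forall t', F v t' -> g t' = k -> tau k = t').
    { intro k. unfold tau. destruct (constructive_indefinite_description _ _) as [t Ht]. exact Ht. }
    apply Hneg. exists (ht v), v, (fun k => W (tau k)).
    split; [exact Cv|]. split; [reflexivity|]. split.
    - intro k. destruct (HWs (tau k) (proj1 (Htaus k))) as [A [B _]]. auto.
    - intros [l Hl]. apply Hinf. exists l. intros t Ht. apply Hl. split.
      + exists (g t). destruct (Htaus (g t)) as [H1 H2].
        destruct (HWs _ H1) as [_ [_ H3]]. rewrite (H2 t Ht eq_refl) in H3 |- *. exact H3.
      + exact (proj1 Ht). }
  set (Y := fun u => C (ht u) /\ is_limit lt (ht u)).
  assert (Hc : forall u, exists q, Y u -> CT u q /\ ~ F u q).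
  { intro u. destruct (classic (Y u)) as [Yu|Yu]; [|exists u; intro; contradiction].
    destruct Yu as [Cu Lu].
    destruct (HF u Cu) as [l Hl].
    assert (Hp0 : exists p, ltT p u).
    { destruct Lu as [[b Hb] _]. destruct (ex u b Hb) as [p [Hp _]]. eauto. }
    destruct (list_ub lt ltT ht Htree u l Hp0) as [p [Hpu Hp]].
    destruct (Hlad u Lu) as [Hsub [_ Hcof]].
    destruct (Hcof p Hpu) as [q [Hq Hpq]].
    exists q. intros _. split; auto. intro Fq.
    destruct (Hp q (Hl q Fq) (proj1 Fq)) as [E|E].
    - subst. exact (irr _ Hpq).
    - exact (irr _ (tr _ _ _ E Hpq)). }
  set (c := fun u => proj1_sig (constructive_indefinite_description _ (Hc u))).
  assert (Hcs : forall u, Y u -> CT u (c u) /\ ~ F u (c u)).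
  { intro u. unfold c. destruct (constructive_indefinite_description _ _) as [q Hq]. exact Hq. }
  assert (HP : forall t a, exists s, lt a (ht t) -> ltT s t /\ ht s = a).
  { intros t a. destruct (classic (lt a (ht t))) as [H|H].
    - destruct (ex t a H) as [s Hs]. exists s; auto.
    - exists t; intro; contradiction. }
  set (P := fun t a => proj1_sig (constructive_indefinite_description _ (HP t a))).
  assert (HPs : forall t a, lt a (ht t) -> ltT (P t a) t /\ ht (P t a) = a).
  { intros t a. unfold P. destruct (constructive_indefinite_description _ _) as [s Hs]. exact Hs. }
  assert (Hgam : forall t, exists gm, (exists b, lt b (ht t)) -> ~ Y t ->
     lt gm (ht t) /\
     ((~ is_limit lt (ht t) /\ forall d, ~ (lt gm d /\ lt d (ht t))) \/
      (is_limit lt (ht t) /\ ~ C (ht t) /\ forall d, C d -> lt gm d -> ~ lt d (ht t)))).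
  { intro t. destruct (classic ((exists b, lt b (ht t)) /\ ~ Y t)) as [[Nt NY]|N].
    2:{ exists (ht t). intros A B. exfalso; apply N; auto. }
    destruct (classic (is_limit lt (ht t))) as [L|L].
    - assert (NC : ~ C (ht t)) by (intro; apply NY; split; auto).
      assert (Hx : ~ forall b, lt b (ht t) -> exists d, C d /\ lt b d /\ lt d (ht t))
        by (intro H; apply NC; apply Ccl; auto).
      apply not_all_ex_not in Hx. destruct Hx as [gm Hx].
      exists gm. intros _ _.
      apply imply_to_and in Hx. destruct Hx as [H1 H2]. split; auto. right. split; auto. split; auto.
      intros d Cd H3 H4. apply H2. eauto.
    - assert (Hx : ~ forall b, lt b (ht t) -> exists d, lt b d /\ lt d (ht t))
        by (intro H; apply L; split; auto).
      apply not_all_ex_not in Hx. destruct Hx as [gm Hx].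
      exists gm. intros _ _.
      apply imply_to_and in Hx. destruct Hx as [H1 H2]. split; auto. left. split; auto.
      intros d H3. apply H2. eauto. }
  set (gam := fun t => proj1_sig (constructive_indefinite_description _ (Hgam t))).
  assert (Hgams : forall t, (exists b, lt b (ht t)) -> ~ Y t ->
     lt (gam t) (ht t) /\
     ((~ is_limit lt (ht t) /\ forall d, ~ (lt (gam t) d /\ lt d (ht t))) \/
      (is_limit lt (ht t) /\ ~ C (ht t) /\ forall d, C d -> lt (gam t) d -> ~ lt d (ht t)))).
  { intro t. unfold gam. destruct (constructive_indefinite_description _ _) as [q Hq]. exact Hq. }
  assert (Hcc : forall a, exists d, C d /\ lt a d) by (intro a; destruct (Cunb a) as [d Hd]; eauto).
  set (cc := fun a => proj1_sig (constructive_indefinite_description _ (Hcc a))).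
  assert (Hccs : forall a, C (cc a) /\ lt a (cc a)).
  { intro a. unfold cc. destruct (constructive_indefinite_description _ _) as [q Hq]. exact Hq. }
  assert (HJ : forall a, exists J : T -> nat, forall t1 t2, lt (ht t1) (cc a) -> lt (ht t2) (cc a) -> J t1 = J t2 -> t1 = t2)
    by (intro a; apply (countable_below lt ht cnt lcnt)).
  set (J := fun a => proj1_sig (constructive_indefinite_description _ (HJ a))).
  assert (HJs : forall a t1 t2, lt (ht t1) (cc a) -> lt (ht t2) (cc a) -> J a t1 = J a t2 -> t1 = t2).
  { intro a. unfold J. destruct (constructive_indefinite_description _ _) as [q Hq]. exact Hq. }
  assert (Hfn : forall t, exists pr : T * nat,
     (Y t /\ fst pr = c t /\ snd pr = 0) \/
     (~ Y t /\ ~ is_limit lt (ht t) /\ fst pr = P t (gam t) /\ snd pr = 1) \/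
     (~ Y t /\ is_limit lt (ht t) /\ fst pr = P t (gam t) /\ snd pr = S (S (J (gam t) t)))).
  { intro t. destruct (classic (Y t)) as [H|H].
    - exists (c t, 0). left; auto.
    - destruct (classic (is_limit lt (ht t))) as [L|L].
      + exists (P t (gam t), S (S (J (gam t) t))). right; right; auto.
      + exists (P t (gam t), 1). right; left; auto. }
  set (fn := fun t => proj1_sig (constructive_indefinite_description _ (Hfn t))).
  assert (Hfns : forall t,
     (Y t /\ fst (fn t) = c t /\ snd (fn t) = 0) \/
     (~ Y t /\ ~ is_limit lt (ht t) /\ fst (fn t) = P t (gam t) /\ snd (fn t) = 1) \/
     (~ Y t /\ is_limit lt (ht t) /\ fst (fn t) = P t (gam t) /\ snd (fn t) = S (S (J (gam t) t)))).
  { intro t. unfold fn. destruct (constructive_indefinite_description _ _) as [q Hq]. exact Hq. }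
  apply Hns.
  apply (special_of_regressive lt ltT ht (fun t => fst (fn t)) (fun t => snd (fn t)) wf Htree).
  - intros t Nt. destruct (Hfns t) as [[Yt [E _]]|[[NY [_ [E _]]]|[NY [_ [E _]]]]]; rewrite E.
    + destruct Yt as [Ct Lt]. destruct (Hlad t Lt) as [Hsub _]. apply Hsub. apply (Hcs t). split; auto.
    + apply (HPs t (gam t)). apply (Hgams t Nt NY).
    + apply (HPs t (gam t)). apply (Hgams t Nt NY).
  - intros s t Ns Nt Ef En Hst. simpl in Ef, En.
    destruct (Hfns s) as [[Ys [Es Ns']]|[[NYs [Ls [Es Ns']]]|[NYs [Ls [Es Ns']]]]];
    destruct (Hfns t) as [[Yt [Et Nt']]|[[NYt [Lt [Et Nt']]]|[NYt [Lt [Et Nt']]]]];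
    try (rewrite Ns', Nt' in En; discriminate).
    + (* both Y *)
      rewrite Es, Et in Ef.
      apply (proj2 (Hcs s Ys)). split.
      * destruct Ys as [Cs Ls]. destruct (Hlad s Ls) as [Hsub _]. apply Hsub. apply (Hcs s). split; auto.
      * exists t. split; [exact (proj2 Yt)|]. split; auto. rewrite Ef. exact (proj1 (Hcs t Yt)).
    + (* both successor *)
      rewrite Es, Et in Ef.
      destruct (Hgams s Ns NYs) as [Gs [[_ Hs]|[Hc' _]]]; [|contradiction].
      destruct (Hgams t Nt NYt) as [Gt [[_ Ht]|[Hc' _]]]; [|contradiction].
      assert (E1 : gam s = gam t).
      { rewrite <- (proj2 (HPs s (gam s) Gs)), <- (proj2 (HPs t (gam t) Gt)), Ef. reflexivity. }
      apply (Ht (ht s)). split; [rewrite <- E1; exact Gs|]. apply mono; exact Hst.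
    + (* both limit non-C *)
      rewrite Es, Et in Ef.
      destruct (Hgams s Ns NYs) as [Gs [[Hc' _]|[_ [NCs Hs]]]]; [contradiction|].
      destruct (Hgams t Nt NYt) as [Gt [[Hc' _]|[_ [NCt Ht]]]]; [contradiction|].
      assert (E1 : gam s = gam t).
      { rewrite <- (proj2 (HPs s (gam s) Gs)), <- (proj2 (HPs t (gam t) Gt)), Ef. reflexivity. }
      rewrite Ns', Nt' in En. injection En as En. rewrite <- E1 in En.
      destruct (Hccs (gam s)) as [Ccc Lcc].
      assert (Bs : lt (ht s) (cc (gam s))).
      { destruct (tri (ht s) (cc (gam s))) as [H|[H|H]]; auto.
        - exfalso; apply NCs; rewrite H; auto.
        - exfalso; exact (Hs _ Ccc Lcc H). }
      assert (Bt : lt (ht t) (cc (gam s))).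
      { destruct (tri (ht t) (cc (gam s))) as [H|[H|H]]; auto.
        - exfalso; apply NCt; rewrite H; auto.
        - exfalso; assert (Lcc2 : lt (gam t) (cc (gam s))) by (rewrite <- E1; exact Lcc); exact (Ht _ Ccc Lcc2 H). }
      assert (s = t) by (apply (HJs (gam s)); auto).
      subst. exact (irr _ Hst).
Qed.
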